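(* Let $X$ be a set and let $\mathcal{L}$ be a nest on $X$. If $M\in\mathcal{L}$, then ${\downarrow}M=\bigcup\{L\in\mathcal{L} : M\not\subseteq L\}=\bigcup\{L\in\mathcal{L} : L\subsetneq M\}$; hence $M$ is a lower set if and only if $M=\bigcup\{L\in\mathcal{L} : L\subsetneq M\}$.
   Context: A nest on $X$ is a family of subsets of $X$ totally ordered by inclusion. Define $x\triangleleft_{\mathcal{L}} y$ iff there exists $L\in\mathcal{L}$ with $x\in L$ and $y\notin L$. For $A\subseteq X$, ${\downarrow}A=\{x\in X : \exists y\in A,\ x\triangleleft_{\mathcal{L}} y\}$; $A$ is a lower set if $A={\downarrow}A$. *)

(* Defs.v *)
Set Implicit Arguments.

Definition subset {X : Type} (A B : X -> Prop) : Prop := forall x, A x -> B x.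

Definition set_eq {X : Type} (A B : X -> Prop) : Prop := forall x, A x <-> B x.

Definition psubset {X : Type} (A B : X -> Prop) : Prop :=
  subset A B /\ ~ subset B A.

Definition bigU {X : Type} (F : (X -> Prop) -> Prop) : X -> Prop :=
  fun x => exists L, F L /\ L x.

Definition is_nest {X : Type} (N : (X -> Prop) -> Prop) : Prop :=
  forall L1 L2, N L1 -> N L2 -> subset L1 L2 \/ subset L2 L1.

Definition nest_rel {X : Type} (N : (X -> Prop) -> Prop) (x y : X) : Prop :=
  exists L, N L /\ L x /\ ~ L y.

Definition down {X : Type} (N : (X -> Prop) -> Prop) (A : X -> Prop) : X -> Prop :=
  fun x => exists y, A y /\ nest_rel N x y.

Definition lower_set {X : Type} (N : (X -> Prop) -> Prop) (A : X -> Prop) : Prop :=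
  set_eq A (down N A).

(* Main.v *)
Require Import Defs.
From Stdlib Require Import Classical.

Theorem proposition3p11 (X : Type) (N : (X -> Prop) -> Prop) (M : X -> Prop) :
  is_nest N -> N M ->
  set_eq (down N M) (bigU (fun L => N L /\ ~ subset M L)) /\
  set_eq (down N M) (bigU (fun L => N L /\ psubset L M)) /\
  (lower_set N M <-> set_eq M (bigU (fun L => N L /\ psubset L M))).
Proof.
  intros Hn HM.
  assert (H1 : set_eq (down N M) (bigU (fun L => N L /\ ~ subset M L))).
  { intro x; split.
    - intros [y [My [L [NL [Lx nLy]]]]]. exists L; split; [split|]; [exact NL| |exact Lx].
      intro S. apply nLy, S, My.
    - intros [L [[NL nS] Lx]].
      apply not_all_ex_not in nS. destruct nS as [y Hy].
      apply imply_to_and in Hy. destruct Hy as [My nLy].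
      exists y; split; auto. exists L; auto. }
  assert (H2 : set_eq (down N M) (bigU (fun L => N L /\ psubset L M))).
  { intro x; rewrite (H1 x); split.
    - intros [L [[NL nS] Lx]]. exists L; split; auto. split; auto. split; auto.
      destruct (Hn L M NL HM); tauto.
    - intros [L [[NL [_ nS]] Lx]]. exists L; auto. }
  split; [exact H1|]. split; [exact H2|].
  unfold lower_set; split; intros H x.
  - rewrite (H x). apply H2.
  - rewrite (H x). symmetry. apply H2.
Qed.
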